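(* Let $\mathcal{S}\subseteq 2^{[n]}$ be a Sperner family and let $h:\mathcal{S}\to 2^{[n]}$ be a function with $h(S)\subseteq S$ for every $S\in\mathcal{S}$. Then $\mathcal{F}=\mathcal{F}(\mathcal{S},h)$ is s-extremal with $\mathrm{Sh}(\mathcal{F})=\mathcal{H}(\mathcal{S})$ if and only if $|\mathcal{F}(\mathcal{S},h)|=|\mathcal{H}(\mathcal{S})|$.
   Context: $[n]=\{1,\dots,n\}$. A Sperner family is a family of sets none of which is contained in another. $\mathcal{F}\subseteq 2^{[n]}$ shatters $S$ if $\{F\cap S:F\in\mathcal{F}\}=2^S$; $\mathrm{Sh}(\mathcal{F})$ is the family of shattered sets; $\mathcal{F}$ is s-extremal if $|\mathrm{Sh}(\mathcal{F})|=|\mathcal{F}|$. For $H\subseteq S\subseteq[n]$: $\mathcal{P}_S=\{S\cup B: B\subseteq[n]\setminus S\}$ and $\mathcal{Q}_{S,H}=\{H\cup B: B\subseteq[n]\setminus S\}$. $\mathrm{Up}(\mathcal{S})=\bigcup_{S\in\mathcal{S}}\mathcal{P}_S$, $\mathcal{H}(\mathcal{S})=2^{[n]}\setminus\mathrm{Up}(\mathcal{S})$, and $\mathcal{F}(\mathcal{S},h)=2^{[n]}\setminus\bigcup_{S\in\mathcal{S}}\mathcal{Q}_{S,h(S)}$. *)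

(* Defs.v *)
From mathcomp Require Import all_boot.
Set Implicit Arguments. Unset Strict Implicit. Unset Printing Implicit Defensive.

(* Ground set [n] is modelled by 'I_n = {0,...,n-1}. Families are {set {set 'I_n}}. *)
Section Defs.
Variable n : nat.
Notation T := 'I_n.

Definition sperner (S : {set {set T}}) : Prop :=
  forall A B, A \in S -> B \in S -> A \subset B -> A = B.

Definition shatters (F : {set {set T}}) (X : {set T}) : bool :=
  [set G :&: X | G in F] == powerset X.

Definition Sh (F : {set {set T}}) : {set {set T}} := [set X | shatters F X].

Definition s_extremal (F : {set {set T}}) : Prop := #|Sh F| = #|F|.

Definition PP (S : {set T}) : {set {set T}} := [set S :|: B | B in powerset (~: S)].

Definition QQ (S H : {set T}) : {set {set T}} := [set H :|: B | B in powerset (~: S)].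

Definition Up (SS : {set {set T}}) : {set {set T}} := \bigcup_(S in SS) PP S.

Definition HH (SS : {set {set T}}) : {set {set T}} := ~: Up SS.

Definition FF (SS : {set {set T}}) (h : {set T} -> {set T}) : {set {set T}} :=
  ~: \bigcup_(S in SS) QQ S (h S).
End Defs.

(* Main.v *)
Require Import Defs.
From mathcomp Require Import all_boot.
Set Implicit Arguments. Unset Strict Implicit. Unset Printing Implicit Defensive.

Section Pajor.
Variable T : finType.

Definition shat (F : {set {set T}}) (X : {set T}) : bool :=
  [set G :&: X | G in F] == powerset X.
Definition ShT (F : {set {set T}}) := [set X | shat F X].

Lemma shatP (F : {set {set T}}) (X : {set T}) :
  reflect (forall Z : {set T}, Z \subset X -> exists2 G, G \in F & G :&: X = Z) (shat F X).
Proof.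
apply: (iffP eqP) => [E Z ZX | H].
  have : Z \in powerset X by rewrite inE.
  by rewrite -E => /imsetP [G GF ->]; exists G.
apply/eqP; rewrite eqEsubset; apply/andP; split.
  by apply/subsetP => Z /imsetP [G _ ->]; rewrite inE subsetIr.
apply/subsetP => Z; rewrite inE => /H [G GF <-]; exact: imset_f.
Qed.

Lemma pajor k : forall (D : {set T}) (F : {set {set T}}), #|D| = k ->
  (forall G, G \in F -> G \subset D) -> #|F| <= #|ShT F|.
Proof.
elim: k => [|k IH] D F cD FD.
  have D0 : D = set0 by apply/eqP; rewrite -cards_eq0 cD.
  have FS : F \subset [set set0].
    apply/subsetP => G GF; rewrite inE; apply/eqP.
    by apply/eqP; rewrite -subset0 -D0 FD.
  case: (set_0Vmem F) => [-> | [G GF]]; first by rewrite cards0.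
  apply: (leq_trans (subset_leq_card FS)); rewrite cards1 card_gt0.
  apply/set0Pn; exists set0; rewrite inE; apply/shatP => Z Z0.
  by exists G => //; rewrite setI0; apply/eqP; rewrite eq_sym -subset0.
have : 0 < #|D| by rewrite cD.
rewrite card_gt0 => /set0Pn [x xD].
set D' := D :\ x.
have cD' : #|D'| = k by move: cD; rewrite (cardsD1 x D) xD add1n => [[]].
set F0 := [set G in F | x \notin G].
set F1x := [set G in F | x \in G].
set F1 := [set G :\ x | G in F1x].
set A := F0 :|: F1.
set B := F0 :&: F1.
have AD : forall G, G \in A -> G \subset D'.
  move=> G; rewrite inE => /orP [|/imsetP [G' ]].
    rewrite inE => /andP [GF xG]; apply/subsetP => t tG.
    rewrite !inE (subsetP (FD _ GF)) // andbT; apply/eqP => ex.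
    by move: xG; rewrite -ex tG.
  rewrite inE => /andP [G'F _] ->; exact: setSD (FD _ G'F).
have BD : forall G, G \in B -> G \subset D'.
  by move=> G; rewrite inE => /andP [G0 G1]; apply: AD; rewrite inE G0.
have IHA := IH _ _ cD' AD.
have IHB := IH _ _ cD' BD.
have cF : #|F| = #|A| + #|B|.
  rewrite cardsUI.
  have -> : #|F1| = #|F1x|.
    apply: card_in_imset => G1 G2; rewrite !inE => /andP [_ x1] /andP [_ x2] E.
    by rewrite -(setD1K x1) -(setD1K x2) E.
  rewrite -(cardsID [set G : {set T} | x \notin G] F).
  congr (_ + _); apply: eq_card => G; rewrite !inE andbC //.
  by rewrite negbK.
have xnA : forall Y, Y \in ShT A -> x \notin Y.
  move=> Y; rewrite inE => /shatP H; apply/negP => xY.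
  have [G GA GY] := H Y (subxx Y).
  have : x \in G :&: Y by rewrite GY.
  rewrite inE => /andP [xG _].
  by move: (subsetP (AD _ GA) x xG); rewrite !inE eqxx.
have xnB : forall Y, Y \in ShT B -> x \notin Y.
  move=> Y; rewrite inE => /shatP H; apply/negP => xY.
  have [G GA GY] := H Y (subxx Y).
  have : x \in G :&: Y by rewrite GY.
  rewrite inE => /andP [xG _].
  by move: (subsetP (BD _ GA) x xG); rewrite !inE eqxx.
have SA : ShT A \subset ShT F.
  apply/subsetP => Y YA; have xY := xnA _ YA; move: YA.
  rewrite !inE => /shatP H; apply/shatP => Z ZY.
  have [G GA GY] := H Z ZY; move: GA; rewrite inE => /orP [|/imsetP [G' ]].
    by rewrite inE => /andP [GF _]; exists G.
  rewrite inE => /andP [G'F _] EG; exists G' => //; rewrite -GY EG.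
  apply/setP => t; rewrite !inE; case tY: (t \in Y); rewrite ?andbF ?andbT //.
  by case: eqP => // et; move: xY; rewrite -et tY.
have SB : [set x |: Y | Y in ShT B] \subset ShT F.
  apply/subsetP => Y' /imsetP [Y YB ->]; have xY := xnB _ YB; move: YB.
  rewrite !inE => /shatP H; apply/shatP => Z ZY.
  case xZ: (x \in Z).
    have [|G GB GY] := H (Z :\ x).
      apply/subsetP => t; rewrite !inE => /andP [tx tZ].
      by move: (subsetP ZY t tZ); rewrite !inE (negbTE tx).
    move: GB; rewrite inE => /andP [_ /imsetP [G' ]].
    rewrite inE => /andP [G'F xG'] EG; exists G' => //.
    apply/setP => t; move/setP: GY => /(_ t); rewrite EG !inE.
    case: (eqVneq t x) => [-> _|tx] /=; first by rewrite xG' xZ.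
    by move=> ->.
  have [|G GB GY] := H Z.
    apply/subsetP => t tZ; move: (subsetP ZY t tZ); rewrite !inE.
    by case: eqP => // et; move: xZ; rewrite -et tZ.
  move: GB; rewrite inE => /andP [/[swap] _]; rewrite inE => /andP [GF xG].
  exists G => //; rewrite -GY; apply/setP => t; rewrite !inE.
  by case: eqP => // ->; rewrite (negbTE xG).
have disj : [disjoint ShT A & [set x |: Y | Y in ShT B]].
  rewrite -setI_eq0; apply/eqP/setP => Y; rewrite in_set0 in_setI.
  apply/negP => /andP [YA /imsetP [Y' _ EY]].
  by move: (xnA _ YA); rewrite EY setU11.
have cimg : #|[set x |: Y | Y in ShT B]| = #|ShT B|.
  apply: card_in_imset => Y1 Y2 Y1B Y2B E.
  by rewrite -(setU1K (xnB _ Y1B)) -(setU1K (xnB _ Y2B)) E.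
rewrite cF; apply: (leq_trans (leq_add IHA IHB)).
rewrite -cimg -cardsUI; move: disj; rewrite -setI_eq0 => /eqP ->; rewrite cards0 addn0; apply: subset_leq_card.
by rewrite subUset SA SB.
Qed.

End Pajor.

Theorem proposition7 (n : nat) (SS : {set {set 'I_n}}) (h : {set 'I_n} -> {set 'I_n}) :
  sperner SS ->
  (forall S, S \in SS -> h S \subset S) ->
  ((s_extremal (FF SS h) /\ Sh (FF SS h) = HH SS) <-> #|FF SS h| = #|HH SS|).
Proof.
move=> _ hS.
have ShH : Sh (FF SS h) \subset HH SS.
  apply/subsetP => X; rewrite !inE => /(shatP (T:='I_n)) H.
  apply/bigcupP => [[S SS' /imsetP [B' B'c EX]]].
  have SX : S \subset X by rewrite EX subsetUl.
  have hSS := hS S SS'.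
  have [|G GF GX] := H (h S :|: (X :\: S)).
    by rewrite subUset subsetDl (subset_trans hSS SX).
  move: GF; rewrite inE => /bigcupP; apply; exists S => //.
  apply/imsetP; exists (G :\: S); first by rewrite inE setDE subsetIr.
  apply/setP => t; move/setP: GX => /(_ t); rewrite !inE.
  move: (subsetP SX t) (subsetP hSS t).
  case: (t \in S); case: (t \in X); case: (t \in G); case: (t \in h S) => //= H1 H2;
    try (by move: (H1 erefl)); by move: (H2 erefl).
split => [[ext E] | cE]; first by rewrite -E ext.
have le1 : #|FF SS h| <= #|Sh (FF SS h)| := pajor (D := setT) erefl (fun G _ => subsetT G).
have E : Sh (FF SS h) = HH SS.
  apply/eqP; rewrite eqEcard ShH /= -cE //.
split => //; apply/eqP; rewrite /s_extremal E cE //.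
Qed.
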